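(* Let $H$ be a simple, strongly connected digraph with at least one arc, let $k$ be a positive integer, and let $T$ be a tournament that does not contain $k$ pairwise arc-disjoint immersion copies of $H$. Then there is a set $F$ of at most $6d_{\mathrm{ctw}}\|H\|^2k^2$ arcs of $T$ such that $T-F$ does not contain $H$ as an immersion.
   Context: $\|H\|:=|V(H)|+|A(H)|$. A tournament is a simple digraph with exactly one arc between every pair of distinct vertices. An immersion copy of $H$ in a digraph $G$ is a subgraph $\widehat H$ of $G$ with a map sending vertices of $H$ to distinct vertices of $\widehat H$ and each arc $(u,v)$ of $H$ to a directed path from the image of $u$ to the image of $v$, such that each arc of $\widehat H$ lies on exactly one of these paths; $G$ contains $H$ as an immersion if it has such a subgraph. For an ordering $\sigma$ (bijection $V(T)\to[|V(T)|]$) and $\alpha\in\{0,\dots,|V(T)|\}$, the $\alpha$-cut is the set of arcs $(u,v)$ with $\sigma(u)>\alpha\ge\sigma(v)$; the width of $\sigma$ is the maximum size of its cuts and the cutwidth $\mathrm{ctw}(T)$ is the minimum width of an ordering. $d_{\mathrm{ctw}}$ is a fixed constant, which is the square of an even integer, such that every tournament not containing a simple digraph $H'$ as an immersion has cutwidth at most $d_{\mathrm{ctw}}\|H'\|^2$ (such a constant exists by a result of Fomin and Pilipczuk). *)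

(* Defs.v *)
From mathcomp Require Import all_boot.
Set Implicit Arguments. Unset Strict Implicit. Unset Printing Implicit Defensive.

Definition simple_digraph (V : finType) (g : rel V) : Prop :=
  irreflexive g.

Definition tournament (V : finType) (g : rel V) : Prop :=
  irreflexive g /\ forall u v : V, u != v -> g u v != g v u.

Definition strongly_connected (V : finType) (g : rel V) : Prop :=
  forall x y : V, connect g x y.

Definition has_arc (V : finType) (g : rel V) : Prop :=
  exists u v, g u v.

Definition arcs (V : finType) (g : rel V) : {set V * V} :=
  [set a | g a.1 a.2].

Definition dnorm (V : finType) (g : rel V) : nat := #|V| + #|arcs g|.

Definition del_arcs (V : finType) (g : rel V) (F : {set V * V}) : rel V :=
  fun u v => g u v && ((u, v) \notin F).

(* A directed path from x to y given by the list p of vertices after x. *)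
Definition dpath (V : finType) (g : rel V) (x y : V) (p : seq V) : bool :=
  [&& path g x p, last x p == y & uniq (x :: p)].

Definition path_arcs (V : finType) (x : V) (p : seq V) : seq (V * V) :=
  zip (x :: p) p.

Definition immersion_model (VH V : finType) (h : rel VH) (g : rel V)
  (phi : VH -> V) (P : VH -> VH -> seq V) : Prop :=
  [/\ injective phi,
      (forall u v, h u v -> dpath g (phi u) (phi v) (P u v)) &
      (forall u v u' v', h u v -> h u' v' -> (u, v) != (u', v') ->
         forall a, a \in path_arcs (phi u) (P u v) ->
                   a \notin path_arcs (phi u') (P u' v'))].

Definition model_arcs (VH V : finType) (h : rel VH)
  (phi : VH -> V) (P : VH -> VH -> seq V) : {set V * V} :=
  [set a | [exists u, exists v, h u v && (a \in path_arcs (phi u) (P u v))]].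

Definition contains_immersion (VH V : finType) (h : rel VH) (g : rel V) : Prop :=
  exists phi P, @immersion_model VH V h g phi P.

Definition contains_k_disjoint_immersions (VH V : finType) (h : rel VH)
  (g : rel V) (k : nat) : Prop :=
  exists (phi : 'I_k -> VH -> V) (P : 'I_k -> VH -> VH -> seq V),
    (forall i, immersion_model h g (phi i) (P i)) /\
    (forall i j, i != j ->
       [disjoint model_arcs h (phi i) (P i) & model_arcs h (phi j) (P j)]).

(* cutwidth: ordering sigma : V -> {1..n} written 0-based as 'I_#|V|;
   the alpha-cut consists of arcs (u,v) with sigma u > alpha >= sigma v
   (1-based), i.e. alpha <= sigma0 u and sigma0 v < alpha (0-based). *)
Definition cut (V : finType) (g : rel V) (sigma : V -> 'I_#|V|) (alpha : nat)
  : {set V * V} :=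
  [set a | [&& g a.1 a.2, alpha <= sigma a.1 & sigma a.2 < alpha]].

Definition ctw_le (V : finType) (g : rel V) (c : nat) : Prop :=
  exists sigma : V -> 'I_#|V|, bijective sigma /\
    forall alpha, alpha <= #|V| -> #|cut g sigma alpha| <= c.

(* d is an admissible value of the constant d_ctw *)
Definition ctw_constant (d : nat) : Prop :=
  (exists m, d = (2 * m) ^ 2) /\
  forall (V : finType) (t : rel V) (VH : finType) (h : rel VH),
    tournament t -> simple_digraph h -> ~ contains_immersion h t ->
    ctw_le t (d * dnorm h ^ 2).

(* Main.v *)
Require Import Defs.
From mathcomp Require Import all_boot zify.
From Stdlib Require Import Classical.
Set Implicit Arguments. Unset Strict Implicit. Unset Printing Implicit Defensive.

Lemma pa_mem (T : finType) (x : T) p a :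
  a \in path_arcs x p -> a.1 \in x :: p /\ a.2 \in p.
Proof.
elim: p x => [|y p IH] x //=.
rewrite /path_arcs /= inE => /orP [/eqP -> /=|/IH [H1 H2]].
  by rewrite !inE !eqxx /=; split => //; rewrite orbT.
by split; rewrite inE ?H1 ?H2 ?orbT.
Qed.

Lemma pa_path (T : finType) (e : rel T) x p a :
  path e x p -> a \in path_arcs x p -> e a.1 a.2.
Proof.
elim: p x => [|y p IH] x //=.
move=> /andP [exy hp]; rewrite /path_arcs /= inE => /orP [/eqP -> //|].
exact: IH.
Qed.

Lemma path_of_arcs (T : finType) (e : rel T) x p :
  (forall a, a \in path_arcs x p -> e a.1 a.2) -> path e x p.
Proof.
elim: p x => [|y p IH] x //= H.
rewrite (H (x, y)) /=; last by rewrite /path_arcs /= inE eqxx.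
apply: IH => a Ha; apply: H; by rewrite /path_arcs /= inE Ha orbT.
Qed.

Lemma imm_mono (VH V : finType) (h : rel VH) (g g2 : rel V) phi P :
  immersion_model h g phi P ->
  (forall u v, h u v -> forall a, a \in path_arcs (phi u) (P u v) -> g2 a.1 a.2) ->
  immersion_model h g2 phi P.
Proof.
move=> [inj hp hd] H; split => // u v huv.
move: (hp u v huv) => /and3P [p1 p2 p3].
by rewrite /dpath p2 p3 path_of_arcs //; apply: H.
Qed.

Lemma imm_mono' (VH V : finType) (h : rel VH) (g g2 : rel V) phi P :
  immersion_model h g phi P -> (forall x y, g x y -> g2 x y) ->
  immersion_model h g2 phi P.
Proof.
move=> Hm H; apply: (imm_mono Hm) => u v huv a Ha; apply: H.
case: Hm => _ hp _; move: (hp u v huv) => /and3P [p1 _ _].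
exact: pa_path p1 Ha.
Qed.

Lemma contains_mono (VH V : finType) (h : rel VH) (g g2 : rel V) :
  contains_immersion h g -> (forall x y, g x y -> g2 x y) ->
  contains_immersion h g2.
Proof. by move=> [phi [P Hm]] H; exists phi, P; exact: imm_mono' Hm H. Qed.

Lemma kcopies_mono (VH V : finType) (h : rel VH) (g g2 : rel V) k :
  contains_k_disjoint_immersions h g k -> (forall x y, g x y -> g2 x y) ->
  contains_k_disjoint_immersions h g2 k.
Proof.
move=> [phi [P [H1 H2]]] H; exists phi, P; split => // i.
exact: imm_mono' (H1 i) H.
Qed.

Lemma model_arcs_in (VH V : finType) (h : rel VH) (g : rel V) phi P a :
  immersion_model h g phi P -> a \in model_arcs h phi P -> g a.1 a.2.
Proof.
move=> [_ hp _]; rewrite inE => /existsP [u /existsP [v /andP [huv Ha]]].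
move: (hp u v huv) => /and3P [p1 _ _]; exact: pa_path p1 Ha.
Qed.

Lemma one_copy (VH V : finType) (h : rel VH) (g : rel V) :
  contains_immersion h g -> contains_k_disjoint_immersions h g 1.
Proof.
move=> [phi [P Hm]]; exists (fun _ => phi), (fun _ => P); split => // i j.
by rewrite (ord1 i) (ord1 j) eqxx.
Qed.

Lemma min_ex (P : nat -> Prop) n : P n -> exists j, P j /\ forall i, i < j -> ~ P i.
Proof.
elim: n {-2}n (leqnn n) => [|n IH] m Hm Pm.
  by exists m; split => // i; move: Hm; rewrite leqn0 => /eqP ->.
case: (classic (exists i, i < m /\ P i)) => [[i [Hi Pi]]|N].
  apply: (IH i) => //; exact: leq_trans Hi Hm.
by exists m; split => // i Hi Pi; apply: N; exists i.
Qed.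

Definition res (V : finType) (t : rel V) (S : {set V}) : rel V :=
  fun u v => [&& t u v, u \in S & v \in S].

Lemma imm_nonnil (VH V : finType) (h : rel VH) (g : rel V) phi P u v :
  immersion_model h g phi P -> irreflexive h -> h u v -> P u v != [::].
Proof.
move=> [inj hp _] hirr huv; apply/negP => /eqP E.
move: (hp u v huv); rewrite /dpath E /= => /andP [/eqP /inj uv _].
by move: huv; rewrite uv hirr.
Qed.

Lemma path_all (V : finType) (e : rel V) (S : {set V}) x p :
  (forall x y, e x y -> x \in S /\ y \in S) -> path e x p -> p != [::] ->
  forall w, w \in x :: p -> w \in S.
Proof.
move=> He; elim: p x => [|y p IH] x //= /andP [exy hp] _ w.
rewrite inE => /orP [/eqP ->|]; first by case: (He _ _ exy).
case: p IH hp => [|z p] IH hp.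
  by rewrite inE => /eqP ->; case: (He _ _ exy).
by apply: IH.
Qed.

Lemma empty_no (VH V : finType) (h : rel VH) (t : rel V) a :
  simple_digraph h -> has_arc h -> 0 < a ->
  ~ contains_k_disjoint_immersions h (res t set0) a.
Proof.
move=> hs [u [v huv]] ha [phi [P [H1 _]]].
have Hm := H1 (Ordinal ha).
have := imm_nonnil Hm hs huv.
case: Hm => _ hp _; move: (hp u v huv) => /and3P [].
by case: (P (Ordinal ha) u v) => [|y p] //= /andP [] /and3P []; rewrite inE.
Qed.

Lemma combine (VH V : finType) (h : rel VH) (t : rel V) (L R S : {set V}) a b :
  L \subset S -> R \subset S -> [disjoint L & R] ->
  contains_k_disjoint_immersions h (res t L) a ->
  contains_k_disjoint_immersions h (res t R) b ->
  contains_k_disjoint_immersions h (res t S) (a + b).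
Proof.
move=> LS RS dLR [phiL [PL [HL1 HL2]]] [phiR [PR [HR1 HR2]]].
exists (fun i => match split i with inl j => phiL j | inr j => phiR j end).
exists (fun i => match split i with inl j => PL j | inr j => PR j end).
split.
  move=> i; case: (split i) => j.
    apply: imm_mono' (HL1 j) _ => x y /and3P [txy xL yL].
    by rewrite /res txy (subsetP LS _ xL) (subsetP LS _ yL).
  apply: imm_mono' (HR1 j) _ => x y /and3P [txy xL yL].
  by rewrite /res txy (subsetP RS _ xL) (subsetP RS _ yL).
move=> i j ij.
have Hs : split i = split j -> i = j.
  by move=> E; rewrite -(splitK i) -(splitK j) E.
case Ei: (split i) => [i'|i']; case Ej: (split j) => [j'|j'].
- apply: HL2; apply/negP => /eqP E; move: ij; by rewrite Hs ?eqxx // Ei Ej E.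
- rewrite disjoint_subset; apply/subsetP => x x1; rewrite inE; apply/negP => x2.
  have := model_arcs_in (HL1 i') x1; have := model_arcs_in (HR1 j') x2.
  move=> /and3P [_ r1 _] /and3P [_ l1 _].
  by rewrite (disjointFr dLR l1) in r1.
- rewrite disjoint_subset; apply/subsetP => x x1; rewrite inE; apply/negP => x2.
  have := model_arcs_in (HR1 i') x1; have := model_arcs_in (HL1 j') x2.
  move=> /and3P [_ r1 _] /and3P [_ l1 _].
  by rewrite (disjointFr dLR r1) in l1.
- apply: HR2; apply/negP => /eqP E; move: ij; by rewrite Hs ?eqxx // Ei Ej E.
Qed.

Definition hk (VH : finType) (h : rel VH) (k : nat) : rel ('I_k * VH) :=
  fun p q => (p.1 == q.1) && h p.2 q.2.
Arguments hk [VH] h k.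

Definition subt (V : finType) (t : rel V) (S : {set V}) : rel {x : V | x \in S} :=
  fun a b => t (val a) (val b).
Arguments subt [V] t S.

Lemma pa_map (A B : finType) (f : A -> B) x p :
  path_arcs (f x) (map f p) = map (fun a => (f a.1, f a.2)) (path_arcs x p).
Proof. by elim: p x => [|y p IH] x //=; rewrite /path_arcs /= -IH. Qed.

Lemma transfer (VH V : finType) (h : rel VH) (t : rel V) (S : {set V}) k :
  contains_immersion (hk h k) (subt t S) ->
  contains_k_disjoint_immersions h (res t S) k.
Proof.
move=> [phi' [P' [inj hp hd]]].
set vv := fun a : {x : V | x \in S} * {x : V | x \in S} => (val a.1, val a.2).
have vvinj : injective vv.
  by move=> [a1 a2] [b1 b2] /= [/val_inj -> /val_inj ->].
exists (fun i u => val (phi' (i, u))).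
exists (fun i u v => map val (P' (i, u) (i, v))).
split.
  move=> i; split.
  - by move=> u v /val_inj /inj [].
  - move=> u v huv.
    have : hk h k (i, u) (i, v) by rewrite /hk /= eqxx.
    move=> /hp /and3P [p1 p2 p3].
    rewrite /dpath last_map (eqP p2) eqxx -map_cons (map_inj_uniq val_inj) p3.
    rewrite path_map; apply/andP; split => //; move: p1; apply: sub_path => a b /= tab.
    by move: tab; rewrite /res /subt => ->; case: a => a ha; case: b => b hb /=; rewrite ha hb.
  - move=> u v u' v' huv huv' ne a.
    rewrite !pa_map => /mapP [b1 Hb1 ->]; apply/negP => /mapP [b2 Hb2 /vvinj E].
    have : hk h k (i, u) (i, v) by rewrite /hk /= eqxx.
    have : hk h k (i, u') (i, v') by rewrite /hk /= eqxx.
    move=> H2 H1; have := hd _ _ _ _ H1 H2.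
    have ne' : ((i, u), (i, v)) != ((i, u'), (i, v')).
      by apply: contra ne => /eqP [-> ->].
    by move=> /(_ ne' b1 Hb1); rewrite E Hb2.
move=> i j ij.
rewrite disjoint_subset; apply/subsetP => a; rewrite !inE.
move=> /existsP [u /existsP [v /andP [huv]]].
rewrite pa_map => /mapP [b1 Hb1 ->]; apply/negP.
move=> /existsP [u' /existsP [v' /andP [huv']]].
rewrite pa_map => /mapP [b2 Hb2 /vvinj E].
have : hk h k (i, u) (i, v) by rewrite /hk /= eqxx.
have : hk h k (j, u') (j, v') by rewrite /hk /= eqxx.
move=> H2 H1; have := hd _ _ _ _ H1 H2.
have ne' : ((i, u), (i, v)) != ((j, u'), (j, v')).
  by apply: contra ij => /eqP [-> _ _ _].
by move=> /(_ ne' b1 Hb1); rewrite E Hb2.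
Qed.

Lemma hk_simple (VH : finType) (h : rel VH) k :
  simple_digraph h -> simple_digraph (hk h k).
Proof. by move=> hs [i u]; rewrite /hk /= hs andbF. Qed.

Lemma hk_norm (VH : finType) (h : rel VH) k :
  dnorm (hk h k) <= k * dnorm h.
Proof.
rewrite /dnorm card_prod card_ord mulnDr leq_add2l.
set f := fun p : 'I_k * (VH * VH) => ((p.1, p.2.1), (p.1, p.2.2)).
apply: leq_trans (_ : #|[set f p | p in setX [set: 'I_k] (arcs h)]| <= _).
  apply: subset_leq_card; apply/subsetP => [[[i u] [j v]]].
  rewrite inE /hk /= => /andP [/eqP <- huv].
  by apply/imsetP; exists (i, (u, v)); rewrite // !inE.
by apply: leq_trans (leq_imset_card _ _) _; rewrite cardsX cardsT card_ord.
Qed.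

Lemma subt_tour (V : finType) (t : rel V) S :
  tournament t -> tournament (subt t S).
Proof.
move=> [ti tt]; split; first by move=> a; rewrite /subt ti.
by move=> a b ab; apply: tt; apply: contra ab => /eqP /val_inj ->.
Qed.

Lemma path_mono (V : finType) (e : rel V) (f : V -> nat) x p :
  (forall a b, e a b -> f a <= f b) -> path e x p ->
  forall w, w \in x :: p -> f x <= f w /\ f w <= f (last x p).
Proof.
move=> He; elim: p x => [|y p IH] x /=.
  by move=> _ w; rewrite inE => /eqP ->.
move=> /andP [exy hp] w; rewrite inE => /orP [/eqP ->|wp].
  have [_ H] := IH y hp y (mem_head _ _).
  by split => //; apply: leq_trans (He _ _ exy) H.
have [H1 H2] := IH y hp w wp.
by split => //; apply: leq_trans (He _ _ exy) H1.
Qed.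

Lemma conn_mono (V : finType) (e : rel V) (f : V -> nat) :
  strongly_connected e -> (forall a b, e a b -> f a <= f b) ->
  forall u v, f u = f v.
Proof.
move=> sc He.
have H : forall u v, f u <= f v.
  move=> u v; have /connectP [q hq ->] := sc u v.
  by have [] := path_mono He hq (mem_head _ _).
by move=> u v; apply/eqP; rewrite eqn_leq !H.
Qed.

Lemma no_imm_split (VH V : finType) (h : rel VH) (t : rel V) (S : {set V})
  (pos : V -> nat) j (FL FR F : {set V * V}) :
  simple_digraph h -> strongly_connected h -> has_arc h ->
  {in S &, injective pos} ->
  FL \subset F -> FR \subset F ->
  (forall x y, res t S x y -> j <= pos x -> pos y < j -> (x, y) \in F) ->
  (forall x y, res t S x y -> j.+1 <= pos x -> pos y < j.+1 -> (x, y) \in F) ->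
  ~ contains_immersion h (del_arcs (res t [set x in S | pos x < j]) FL) ->
  ~ contains_immersion h (del_arcs (res t [set x in S | j.+1 <= pos x]) FR) ->
  ~ contains_immersion h (del_arcs (res t S) F).
Proof.
move=> hs sc [u0 [v0 h0]] pinj FLF FRF C1 C2 NL NR [phi [P Hm]].
set g := del_arcs (res t S) F.
pose part x := (j <= pos x) + (j.+1 <= pos x).
have gmono : forall x y, g x y -> part x <= part y.
  move=> x y /andP [rxy nF].
  have c1 : ~~ ((j <= pos x) && (pos y < j)).
    by apply/negP => /andP [a1 a2]; rewrite (C1 _ _ rxy a1 a2) in nF.
  have c2 : ~~ ((j.+1 <= pos x) && (pos y < j.+1)).
    by apply/negP => /andP [a1 a2]; rewrite (C2 _ _ rxy a1 a2) in nF.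
  rewrite /part; move: c1 c2.
  case: (leqP j (pos x)); case: (leqP j.+1 (pos x));
  case: (leqP j (pos y)); case: (leqP j.+1 (pos y)) => //= *; lia.
case: (Hm) => pinj' hp hd.
have gS : forall x y, g x y -> x \in S /\ y \in S.
  by move=> x y /andP [/and3P [_ -> ->]].
have huv : forall u v, h u v -> part (phi u) <= part (phi v).
  move=> u v /hp /and3P [p1 /eqP p2 _].
  by have [] := path_mono gmono p1 (mem_head _ _); rewrite p2.
have Pall := conn_mono sc huv.
set p0 := part (phi u0).
have Hw : forall u v, h u v -> forall w, w \in phi u :: P u v ->
    part w = p0 /\ w \in S.
  move=> u v uv w wP; move: (hp _ _ uv) => /and3P [p1 /eqP p2 _].
  split; last by apply: (path_all gS p1 (imm_nonnil Hm hs uv)).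
  have [a1 a2] := path_mono gmono p1 wP.
  rewrite p2 in a2; rewrite /p0 (Pall u0 u).
  by apply/eqP; rewrite eqn_leq a1 (Pall u v) a2.
have Harc : forall u v, h u v -> forall a, a \in path_arcs (phi u) (P u v) ->
    [/\ g a.1 a.2, part a.1 = p0, part a.2 = p0, a.1 \in S & a.2 \in S].
  move=> u v uv a Ha; move: (hp _ _ uv) => /and3P [p1 _ _].
  have [m1 m2] := pa_mem Ha.
  have [q1 s1] := Hw _ _ uv _ m1.
  have m2' : a.2 \in phi u :: P u v by rewrite inE m2 orbT.
  have [q2 s2] := Hw _ _ uv _ m2'.
  by split => //; apply: pa_path p1 Ha.
have p0le : p0 <= 2 by rewrite /p0 /part; case: (j <= _); case: (j.+1 <= _).
case: p0 p0le Hw Harc => [|[|[|//]]] _ Hw Harc.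
- apply: NL; exists phi, P; apply: (imm_mono Hm) => u v uv [x y] Ha.
  have [/andP [/and3P [txy _ _] nF] q1 q2 s1 s2] := Harc _ _ uv _ Ha.
  move: q1 q2; rewrite /part /= => q1 q2.
  rewrite /del_arcs /res txy !inE s1 s2 /=.
  have -> : pos x < j by move: q1; lia.
  have -> : pos y < j by move: q2; lia.
  by apply/negP => /(subsetP FLF); rewrite (negbTE nF).
- have hs0 := Hw _ _ h0 _ (mem_head _ _).
  have mv : phi v0 \in phi u0 :: P u0 v0.
    by move: (hp _ _ h0) => /and3P [_ /eqP <- _]; rewrite mem_last.
  have [q2 s2] := Hw _ _ h0 (phi v0) mv.
  case: hs0 => q1 s1.
  have E : pos (phi u0) = pos (phi v0).
    by move: q1 q2; rewrite /part; lia.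
  by move: h0; rewrite (pinj' _ _ (pinj _ _ s1 s2 E)) hs.
- apply: NR; exists phi, P; apply: (imm_mono Hm) => u v uv [x y] Ha.
  have [/andP [/and3P [txy _ _] nF] q1 q2 s1 s2] := Harc _ _ uv _ Ha.
  move: q1 q2; rewrite /part /= => q1 q2.
  rewrite /del_arcs /res txy !inE s1 s2 /=.
  have -> : j.+1 <= pos x by move: q1; lia.
  have -> : j.+1 <= pos y by move: q2; lia.
  by apply/negP => /(subsetP FRF); rewrite (negbTE nF).
Qed.

Lemma cardU_le (T : finType) (A B : {set T}) : #|A :|: B| <= #|A| + #|B|.
Proof. by case: (leq_card_setU A B). Qed.

Lemma arcs_res_sub (V : finType) (t : rel V) (L S : {set V}) :
  L \subset S -> arcs (res t L) \subset arcs (res t S).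
Proof.
move=> LS; apply/subsetP => a; rewrite !inE => /and3P [ta l1 l2].
by rewrite /res ta (subsetP LS _ l1) (subsetP LS _ l2).
Qed.

Lemma main (d : nat) (hd : ctw_constant d)
  (VH : finType) (h : rel VH) (V : finType) (t : rel V) :
  simple_digraph h -> strongly_connected h -> has_arc h -> tournament t ->
  forall k, 0 < k -> forall S : {set V},
  ~ contains_k_disjoint_immersions h (res t S) k ->
  exists F : {set V * V},
    [/\ F \subset arcs (res t S),
        #|F| + 2 * (d * dnorm h ^ 2) <= 4 * (d * dnorm h ^ 2) * k ^ 2 &
        ~ contains_immersion h (del_arcs (res t S) F)].
Proof.
move=> hs sc ha tt k; elim/ltn_ind: k => k IH k0 S Hno.
set X := d * dnorm h ^ 2.
case: (eqVneq k 1) => [k1|k1].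
  exists set0; split; [exact: sub0set| rewrite cards0 k1; lia |].
  move=> Hc; apply: Hno; rewrite k1; apply: one_copy.
  by apply: (contains_mono Hc) => x y /andP [].
set b := k./2; set a := k - b.
have kb : k = odd k + b.*2 by rewrite /b odd_double_half.
have b0 : 0 < b.
  move: kb k1 k0; rewrite /b; case: (odd k); case: (k./2) => //= ; lia.
have ab : a = odd k + b by rewrite /a {1}kb; case: (odd k); lia.
clearbody a b.
have a0 : 0 < a by lia.
have ak : a < k by lia.
have bk : b < k by lia.
have abk : a + b = k by lia.
have arith : 4 * a ^ 2 + 4 * b ^ 2 <= 2 * k ^ 2 + 2.
  rewrite -abk ab; case: (odd k) => /=; nia.
case: (classic (contains_k_disjoint_immersions h (res t S) a)) => Ha; last first.
  have [F [F1 F2 F3]] := IH a ak a0 S Ha.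
  exists F; split => //; apply: leq_trans F2 _.
  rewrite /X; apply: leq_mul => //; rewrite leq_exp2r // ltnW //.
have Himm : ~ contains_immersion (hk h k) (subt t S).
  by move=> /transfer.
have [sigma [sbij sw]] := hd.2 _ (subt t S) _ (hk h k) (subt_tour S tt)
  (@hk_simple _ h k hs) Himm.
pose pos (x : V) : nat := if (insub x : option {x : V | x \in S}) is Some y then val (sigma y) else 0.
have posE : forall x (hx : x \in S), pos x = val (sigma (Sub x hx)).
  by move=> x hx; rewrite /pos insubT.
have pinj : {in S &, injective pos}.
  move=> x y hx hy; rewrite (posE _ hx) (posE _ hy) => /val_inj E.
  have := bij_inj sbij E; by move=> /(congr1 val).
set n := #|{: {x : V | x \in S}}|.
have posn : forall x, x \in S -> pos x < n.
  by move=> x hx; rewrite (posE _ hx); exact: ltn_ord.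
pose L j := [set x in S | pos x < j].
pose R j := [set x in S | j <= pos x].
have HLn : contains_k_disjoint_immersions h (res t (L n)) a.
  apply: (kcopies_mono Ha) => x y /and3P [txy xS yS].
  by rewrite /res txy !inE xS yS !posn.
have [j [Hj Hmin]] := @min_ex (fun j => contains_k_disjoint_immersions h (res t (L j)) a) n HLn.
have jn : j <= n.
  by rewrite leqNgt; apply/negP => /Hmin; apply.
case: j Hj Hmin jn => [|j] Hj Hmin jn.
  apply: False_ind; apply: (@empty_no _ _ h t a hs ha a0).
  by apply: (kcopies_mono Hj) => x y /and3P [_]; rewrite inE ltn0 andbF.
have NL : ~ contains_k_disjoint_immersions h (res t (L j)) a by apply: Hmin.
have NR : ~ contains_k_disjoint_immersions h (res t (R j.+1)) b.
  move=> HR; apply: Hno; rewrite -abk.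
  apply: (combine _ _ _ Hj HR).
  - by apply/subsetP => x; rewrite inE => /andP [].
  - by apply/subsetP => x; rewrite inE => /andP [].
  - rewrite disjoint_subset; apply/subsetP => x; rewrite !inE => /andP [_ l].
    by rewrite ltnNge -ltnS l andbF.
have [FL [FL1 FL2 FL3]] := IH a ak a0 (L j) NL.
have [FR [FR1 FR2 FR3]] := IH b bk b0 (R j.+1) NR.
pose Cut al := [set p : V * V | [&& res t S p.1 p.2, al <= pos p.1 & pos p.2 < al]].
have cutb : forall al, al <= n -> #|Cut al| <= k ^ 2 * X.
  move=> al aln.
  apply: leq_trans (_ : #|[set (val q.1, val q.2) | q in cut (subt t S) sigma al]| <= _).
    apply: subset_leq_card; apply/subsetP => [[x y]].
    rewrite inE /= => /and3P [/and3P [txy xS yS] l1 l2].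
    apply/imsetP; exists (Sub x xS, Sub y yS) => //.
    rewrite inE /=.
    move: l1 l2; rewrite (posE x xS) (posE y yS) => l1 l2.
    apply/and3P; split => //.
  apply: leq_trans (leq_imset_card _ _) _.
  apply: leq_trans (sw al aln) _.
  rewrite /X mulnCA leq_mul2l; apply/orP; right.
  rewrite -expnMn leq_exp2r //; exact: hk_norm.
set F := FL :|: FR :|: Cut j :|: Cut j.+1.
exists F; split.
- rewrite !subUset -!andbA; apply/and4P; split.
  + apply: (subset_trans FL1); apply: arcs_res_sub; apply/subsetP => x; rewrite inE => /andP [] //.
  + apply: (subset_trans FR1); apply: arcs_res_sub; apply/subsetP => x; rewrite inE => /andP [] //.
  + by apply/subsetP => p; rewrite !inE => /and3P [].
  + by apply/subsetP => p; rewrite !inE => /and3P [].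
- have c1 := cutb j (ltnW jn); have c2 := cutb j.+1 jn.
  apply: leq_trans (_ : #|FL| + #|FR| + #|Cut j| + #|Cut j.+1| + 2 * X <= _).
    rewrite leq_add2r; apply: leq_trans (cardU_le _ _) _; rewrite leq_add2r.
    apply: leq_trans (cardU_le _ _) _; rewrite leq_add2r; exact: cardU_le.
  have H : 4 * X * a ^ 2 + 4 * X * b ^ 2 <= 2 * X * k ^ 2 + 2 * X.
    have := leq_mul (leqnn X) arith; rewrite !mulnDr; lia.
  lia.
- apply: (no_imm_split hs sc ha pinj _ _ _ _ FL3 FR3).
  + by rewrite /F -!setUA subsetUl.
  + by rewrite /F -!setUA setUCA subsetUl.
  + by move=> x y rxy l1 l2; rewrite /F !inE /= rxy l1 l2 !orbT.
  + by move=> x y rxy l1 l2; rewrite /F !inE /= rxy l1 l2 !orbT.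
Qed.

Theorem lemma16 (d : nat) (hd : ctw_constant d)
  (VH : finType) (h : rel VH) (V : finType) (t : rel V) (k : nat) :
  simple_digraph h -> strongly_connected h -> has_arc h ->
  0 < k -> tournament t ->
  ~ contains_k_disjoint_immersions h t k ->
  exists F : {set V * V},
    [/\ F \subset arcs t,
        #|F| <= 6 * d * dnorm h ^ 2 * k ^ 2 &
        ~ contains_immersion h (del_arcs t F)].
Proof.
move=> hs sc ha k0 tt Hno.
have Hno' : ~ contains_k_disjoint_immersions h (res t setT) k.
  by move=> Hc; apply: Hno; apply: (kcopies_mono Hc) => x y /and3P [].
have [F [F1 F2 F3]] := main hd hs sc ha tt k0 Hno'.
exists F; split.
- apply: (subset_trans F1); apply/subsetP => p; rewrite !inE => /and3P [] //.
- apply: leq_trans (leq_addr _ _) _; apply: leq_trans F2 _.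
  rewrite !mulnA; repeat (apply: leq_mul => //).
- move=> Hc; apply: F3; apply: (contains_mono Hc) => x y /andP [txy nF].
  by rewrite /del_arcs /res txy !inE.
Qed.
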